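(* Let $\mathcal X,\mathcal Y$ be Hilbert spaces and $(C,\mathbf A)$, with $C\in\mathcal L(\mathcal X,\mathcal Y)$, $\mathbf A=(A_1,\dots,A_d)\in\mathcal L(\mathcal X)^d$, a contractive pair. Then: (1) $(C,\mathbf A)$ is output-stable, $(S^R_j)^*\widehat{\mathcal O}_{C,\mathbf A}x=\widehat{\mathcal O}_{C,\mathbf A}A_jx$ for all $x$ and $j$, and hence $\operatorname{Ran}\widehat{\mathcal O}_{C,\mathbf A}$ is invariant under $(S^R_j)^*$, $j=1,\dots,d$. (2) $\widehat{\mathcal O}_{C,\mathbf A}$ is a contraction from $\mathcal X$ into $H^2_{\mathcal Y}(\mathcal F_d)$; it is isometric if and only if $(C,\mathbf A)$ is an isometric pair and $\mathbf A$ is strongly stable. (3) If $\mathcal M:=\operatorname{Ran}\widehat{\mathcal O}_{C,\mathbf A}$ is given the lifted norm $\|\widehat{\mathcal O}_{C,\mathbf A}x\|_{\mathcal M}=\|Qx\|_{\mathcal X}$, where $Q$ is the orthogonal projection of $\mathcal X$ onto $(\operatorname{Ker}\widehat{\mathcal O}_{C,\mathbf A})^\perp$, then $\widehat{\mathcal O}_{C,\mathbf A}$ is a coisometry of $\mathcal X$ onto $\mathcal M$, $\mathcal M$ is contractively contained in $H^2_{\mathcal Y}(\mathcal F_d)$, and $\mathcal M$ is isometrically equal to the formal noncommutative reproducing kernel Hilbert space $\mathcal H(K_{C,\mathbf A})$ with kernel $K_{C,\mathbf A}(z,w)=C(I-Z(z)A)^{-1}(I-A^*Z(w)^* )^{-1}C^*$.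 (4) With this norm, $\sum_{j=1}^d\|(S^R_j)^*f\|^2_{\mathcal H(K_{C,\mathbf A})}\le\|f\|^2_{\mathcal H(K_{C,\mathbf A})}-\|f_\emptyset\|^2_{\mathcal Y}$ for all $f\in\mathcal H(K_{C,\mathbf A})$; moreover equality holds for all $f$ if and only if $Q-\sum_{j=1}^dA_j^*QA_j=C^*C$. In particular, if $(C,\mathbf A)$ is observable, equality holds for all $f$ if and only if $(C,\mathbf A)$ is an isometric pair.
   Context: $\mathcal F_d$: free semigroup of words on $\{1,\dots,d\}$, empty word $\emptyset$; for $v=i_N\cdots i_1$: $|v|=N$, $v^\top=i_1\cdots i_N$, $\mathbf A^v=A_{i_N}\cdots A_{i_1}$, $z^v=z_{i_N}\cdots z_{i_1}$ (noncommuting indeterminates). $H^2_{\mathcal Y}(\mathcal F_d)$: formal power series $\sum_vf_vz^v$ with $f_v\in\mathcal Y$, $\sum\|f_v\|^2<\infty$; $(S^R_j)^*\colon\sum_vf_vz^v\mapsto\sum_vf_{vj}z^v$. $\widehat{\mathcal O}_{C,\mathbf A}x=\sum_v(C\mathbf A^vx)z^v$; output-stable means $\widehat{\mathcal O}_{C,\mathbf A}$ is bounded $\mathcal X\to H^2_{\mathcal Y}(\mathcal F_d)$. Contractive pair: $C^*C+\sum_jA_j^*A_j\le I$; isometric: equality. $\mathbf A$ strongly stable: $\sum_{|v|=N}\|\mathbf A^vx\|^2\to0$ for all $x$. Observable: $\operatorname{Ker}\widehat{\mathcal O}_{C,\mathbf A}=\{0\}$. The kernel is the formal series $K_{C,\mathbf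 A}(z,w)=\sum_{\alpha,\beta\in\mathcal F_d}C\mathbf A^\alpha(\mathbf A^\beta)^*C^*z^\alpha w^{\beta^\top}$; for a formal kernel $K=\sum K_{\alpha,\beta}z^\alpha w^{\beta^\top}$, $\mathcal H(K)$ is the Hilbert space of formal power series $f=\sum f_\alpha z^\alpha$ (coefficients in $\mathcal Y$) such that $K_\beta y:=\sum_\alpha K_{\alpha,\beta}y\,z^\alpha\in\mathcal H(K)$ and $\langle f,K_\beta y\rangle=\langle f_\beta,y\rangle_{\mathcal Y}$ for all $\beta\in\mathcal F_d$, $y\in\mathcal Y$, $f\in\mathcal H(K)$. *)

(* Defs.v *)
From HB Require Import structures.
From mathcomp Require Import all_boot all_order all_algebra.
From mathcomp Require Import boolp classical_sets reals.
From mathcomp Require Export complex.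
From Stdlib Require Import ClassicalEpsilon.
Set Implicit Arguments. Unset Strict Implicit. Unset Printing Implicit Defensive.
Import Order.TTheory GRing.Theory Num.Theory.
Local Open Scope ring_scope.

Definition ipnorm2 (R : realType) (V : Type) (ip : V -> V -> R[i]) (v : V) : R :=
  complex.Re (ip v v).

Definition ip_cauchy (R : realType) (V : zmodType) (ip : V -> V -> R[i])
  (u : nat -> V) : Prop :=
  forall e : R, 0 < e -> exists N : nat, forall m n : nat,
    (N <= m)%N -> (N <= n)%N -> ipnorm2 ip (u m - u n) < e.

Definition ip_converges_to (R : realType) (V : zmodType) (ip : V -> V -> R[i])
  (u : nat -> V) (l : V) : Prop :=
  forall e : R, 0 < e -> exists N : nat, forall n : nat,
    (N <= n)%N -> ipnorm2 ip (u n - l) < e.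

Record hilbert (R : realType) := Hilbert {
  hs_sort :> lmodType R[i];
  hs_ip : hs_sort -> hs_sort -> R[i];
  hs_ipDZl : forall (a : R[i]) (u v w : hs_sort),
      hs_ip (a *: u + v) w = a * hs_ip u w + hs_ip v w;
  hs_ipC : forall u v : hs_sort, hs_ip v u = (hs_ip u v)^*;
  hs_ip_ge0 : forall u : hs_sort, 0 <= hs_ip u u;
  hs_ip_eq0 : forall u : hs_sort, hs_ip u u = 0 -> u = 0;
  hs_complete : forall u : nat -> hs_sort, ip_cauchy hs_ip u ->
      exists l, ip_converges_to hs_ip u l
}.


Definition hnorm2 (R : realType) (H : hilbert R) (x : H) : R := ipnorm2 (@hs_ip R H) x.

Definition bounded_lin (R : realType) (X Y : hilbert R) (T : X -> Y) : Prop :=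
  linear T /\ exists B : R, forall x, hnorm2 (T x) <= B * hnorm2 x.

Definition is_adjoint (R : realType) (X Y : hilbert R) (T : X -> Y) (Ts : Y -> X) :=
  forall (x : X) (y : Y), hs_ip (T x) (y) = hs_ip (x) (Ts y).

Definition orth_compl (R : realType) (X : hilbert R) (S : set X) : set X :=
  [set x | forall y, S y -> hs_ip (x) (y) = 0].

Definition is_orth_proj (R : realType) (X : hilbert R) (P : X -> X) (S : set X) :=
  forall x, S (P x) /\ forall y, S y -> hs_ip (x - P x) (y) = 0.

(* A word v = i_N ... i_1 is the list [:: i_N; ...; i_1] of letters in 'I_d
   (letter k : 'I_d stands for k+1).  The empty word is [::].
   |v| = size v, v^T = rev v, the word vj is rcons v j. *)
Notation word d := (seq 'I_d).

(* formal power series sum_v f_v z^v with coefficients in Y *)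
Definition fps (d : nat) (Y : Type) := word d -> Y.

Definition Apow (V : Type) (d : nat) (A : 'I_d -> V -> V) (v : word d) (x : V) : V :=
  foldr (fun i y => A i y) x v.

Definition sum_len (R : realType) (d n : nat) (F : word d -> R) : R :=
  \sum_(t : n.-tuple 'I_d) F (tval t).

Definition h2_psum (R : realType) (d : nat) (Y : hilbert R) (f : fps d Y) (N : nat) : R :=
  \sum_(n < N) sum_len n (fun v => hnorm2 (f v)).

Definition in_H2 (R : realType) (d : nat) (Y : hilbert R) (f : fps d Y) : Prop :=
  exists B : R, forall N, h2_psum f N <= B.

(* ||f||^2_{H^2} = sum_v ||f_v||^2 (nonnegative series: supremum of partial sums) *)
Definition h2_norm2 (R : realType) (d : nat) (Y : hilbert R) (f : fps d Y) : R :=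
  sup (range (h2_psum f)).

Definition SRadj (d : nat) (Y : Type) (j : 'I_d) (f : fps d Y) : fps d Y :=
  fun v => f (rcons v j).

Definition Ohat (R : realType) (d : nat) (X Y : hilbert R) (C : X -> Y)
  (A : 'I_d -> X -> X) (x : X) : fps d Y :=
  fun v => C (Apow A v x).

Definition output_stable (R : realType) (d : nat) (X Y : hilbert R) (C : X -> Y)
  (A : 'I_d -> X -> X) : Prop :=
  (forall x, in_H2 (Ohat C A x)) /\
  exists B : R, forall x, h2_norm2 (Ohat C A x) <= B * hnorm2 x.

Definition contractive_pair (R : realType) (d : nat) (X Y : hilbert R)
  (C : X -> Y) (Cs : Y -> X) (A As : 'I_d -> X -> X) : Prop :=
  forall x : X, hs_ip (Cs (C x) + \sum_(j < d) As j (A j x)) x <= hs_ip x x.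

Definition isometric_pair (R : realType) (d : nat) (X Y : hilbert R)
  (C : X -> Y) (Cs : Y -> X) (A As : 'I_d -> X -> X) : Prop :=
  forall x : X, Cs (C x) + \sum_(j < d) As j (A j x) = x.

Definition strongly_stable (R : realType) (d : nat) (X : hilbert R)
  (A : 'I_d -> X -> X) : Prop :=
  forall x : X, forall e : R, 0 < e -> exists N0 : nat, forall N, (N0 <= N)%N ->
    sum_len N (fun v => hnorm2 (Apow A v x)) < e.

Definition observable (R : realType) (d : nat) (X Y : hilbert R) (C : X -> Y)
  (A : 'I_d -> X -> X) : Prop :=
  forall x : X, Ohat C A x = (fun _ => 0) -> x = 0.

Definition ran (A B : Type) (T : A -> B) : set B := [set f | exists x, T x = f].

(* a chosen preimage (classical choice); irrelevant outside the range *)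
Definition preim (A : zmodType) (B : Type) (T : A -> B) (f : B) : A :=
  epsilon (inhabits 0) (fun x => T x = f).

(* lifted inner product on Ran T:  <T x, T x'>_M = <Q x, Q x'>_X *)
Definition lifted_ip (R : realType) (X : hilbert R) (B : Type) (T : X -> B)
  (Q : X -> X) (f g : B) : R[i] :=
  hs_ip (Q (preim T f)) (Q (preim T g)).

Definition fps_add (R : realType) (d : nat) (Y : hilbert R) (f g : fps d Y) : fps d Y :=
  fun v => f v + g v.
Definition fps_scale (R : realType) (d : nat) (Y : hilbert R) (a : R[i]) (f : fps d Y)
  : fps d Y := fun v => a *: f v.
Definition fps_zero (R : realType) (d : nat) (Y : hilbert R) : fps d Y := fun _ => 0.

Definition fps_hilbert (R : realType) (d : nat) (Y : hilbert R)
  (S : set (fps d Y)) (ipS : fps d Y -> fps d Y -> R[i]) : Prop :=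
  S (@fps_zero R d Y) /\
  (forall a f g, S f -> S g -> S (fps_add (fps_scale a f) g)) /\
  [/\ (forall a f g h, S f -> S g -> S h ->
          ipS (fps_add (fps_scale a f) g) h = a * ipS f h + ipS g h),
      (forall f g, S f -> S g -> ipS g f = (ipS f g)^*),
      (forall f, S f -> 0 <= ipS f f /\ (ipS f f = 0 -> f = @fps_zero R d Y)) &
      (forall u : nat -> fps d Y, (forall n, S (u n)) ->
          (forall e : R, 0 < e -> exists N : nat, forall m n : nat,
             (N <= m)%N -> (N <= n)%N ->
             complex.Re (ipS (fps_add (u m) (fps_scale (-1) (u n)))
                             (fps_add (u m) (fps_scale (-1) (u n)))) < e) ->
          exists l, S l /\
          (forall e : R, 0 < e -> exists N : nat, forall n : nat, (N <= n)%N ->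
             complex.Re (ipS (fps_add (u n) (fps_scale (-1) l))
                             (fps_add (u n) (fps_scale (-1) l))) < e))].

(* a formal kernel is given through its "columns" K_beta y = sum_alpha K_{alpha,beta} y z^alpha;
   (S, ipS) is (isometrically) the formal RKHS H(K) *)
Definition is_formal_rkhs (R : realType) (d : nat) (Y : hilbert R)
  (S : set (fps d Y)) (ipS : fps d Y -> fps d Y -> R[i])
  (Kcol : word d -> Y -> fps d Y) : Prop :=
  fps_hilbert S ipS /\
  forall (beta : word d) (y : Y),
    S (Kcol beta y) /\ forall f, S f -> ipS f (Kcol beta y) = hs_ip (f beta) (y).

(* K_{C,A}(z,w) = sum_{alpha,beta} C A^alpha (A^beta)^* C^* z^alpha w^{beta^T};
   column beta: alpha |-> C A^alpha (A^beta)^* C^* y, with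
   (A^beta)^* = A_{i_1}^* ... A_{i_N}^* for beta = i_N ... i_1 *)
Definition KCA_col (R : realType) (d : nat) (X Y : hilbert R) (C : X -> Y) (Cs : Y -> X)
  (A As : 'I_d -> X -> X) (beta : word d) (y : Y) : fps d Y :=
  fun alpha => C (Apow A alpha (Apow As (rev beta) (Cs y))).

(* Main.v *)
Require Import Defs.
From HB Require Import structures.
From mathcomp Require Import all_boot all_order all_algebra.
From mathcomp Require Import boolp classical_sets reals complex.
From Stdlib Require Import ClassicalEpsilon.
From mathcomp Require Import ring lra.
Import Order.TTheory GRing.Theory Num.Theory.
Local Open Scope ring_scope.
Set Implicit Arguments. Unset Strict Implicit. Unset Printing Implicit Defensive.
Section IP.
Variable R : realType.
Variable X : hilbert R.
Local Notation ip := (@hs_ip R X).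
Lemma ipDl (u v w : X) : ip (u + v) w = ip u w + ip v w.
Proof. by rewrite -[u]scale1r hs_ipDZl mul1r scale1r. Qed.
Lemma ip0l (w : X) : ip 0 w = 0.
Proof. by apply: (addrI (ip 0 w)); rewrite -ipDl !addr0. Qed.
Lemma ipZl a (u w : X) : ip (a *: u) w = a * ip u w.
Proof. by rewrite -[a *: u]addr0 hs_ipDZl ip0l addr0. Qed.
Lemma ipNl (u w : X) : ip (- u) w = - ip u w.
Proof. by rewrite -scaleN1r ipZl mulN1r. Qed.
Lemma ipBl (u v w : X) : ip (u - v) w = ip u w - ip v w.
Proof. by rewrite ipDl ipNl. Qed.
Lemma ipDr (u v w : X) : ip w (u + v) = ip w u + ip w v.
Proof. by rewrite [LHS]hs_ipC ipDl [ip w u]hs_ipC [ip w v]hs_ipC; apply: rmorphD. Qed.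
Lemma ipZr a (u w : X) : ip w (a *: u) = a^* * ip w u.
Proof. by rewrite [LHS]hs_ipC ipZl [ip w u]hs_ipC; apply: rmorphM. Qed.
Lemma ip0r (w : X) : ip w 0 = 0.
Proof. by rewrite hs_ipC ip0l rmorph0. Qed.
Lemma ipNr (u w : X) : ip w (- u) = - ip w u.
Proof. by rewrite [LHS]hs_ipC ipNl [ip w u]hs_ipC; apply: rmorphN. Qed.
Lemma ipBr (u v w : X) : ip w (u - v) = ip w u - ip w v.
Proof. by rewrite ipDr ipNr. Qed.
Lemma ip_suml I (r : seq I) (P : pred I) (F : I -> X) w :
  ip (\sum_(i <- r | P i) F i) w = \sum_(i <- r | P i) ip (F i) w.
Proof.
elim/big_rec2: _ => [|i y1 y2 _ <-]; first exact: ip0l.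
by rewrite ipDl.
Qed.
Lemma ip_selfE (u : X) : ip u u = (hnorm2 u)%:C%C.
Proof.
have := hs_ip_ge0 u; rewrite /hnorm2 /ipnorm2.
case: (ip u u) => a b; by rewrite lecE /= => /andP[/eqP -> _].
Qed.
Lemma hnorm2_ge0 (u : X) : 0 <= hnorm2 u.
Proof. by have := hs_ip_ge0 u; rewrite ip_selfE lecR. Qed.
Lemma hnorm2_eq0 (u : X) : hnorm2 u = 0 -> u = 0.
Proof. by move=> h; apply: hs_ip_eq0; rewrite ip_selfE h. Qed.
Lemma ip_eq0_all (u : X) : (forall v, ip u v = 0) -> u = 0.
Proof. by move=> h; apply: hs_ip_eq0; apply: h. Qed.
Lemma conj_real (r : R) : (r%:C%C)^* = r%:C%C.
Proof. exact: conjc_real. Qed.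
Lemma ReD (a b : R[i]) : complex.Re (a + b) = complex.Re a + complex.Re b.
Proof. by case: a => ? ?; case: b. Qed.
Lemma hnorm2_orth (u v : X) : ip u v = 0 -> hnorm2 (u + v) = hnorm2 u + hnorm2 v.
Proof.
move=> h; have h' : ip v u = 0 by rewrite hs_ipC h rmorph0.
by rewrite /hnorm2 /ipnorm2 ipDl !ipDr h h' addr0 add0r ReD.
Qed.
Lemma polar (G : X -> X) : (forall x y, G (x + y) = G x + G y) ->
  (forall a x, G (a *: x) = a *: G x) -> (forall x, ip (G x) x = 0) ->
  forall x, G x = 0.
Proof.
move=> GD GZ h0 x.
have E1 y : ip (G x) y + ip (G y) x = 0.
  have := h0 (x + y); rewrite GD !ipDl !ipDr !h0 add0r addr0.
  by rewrite addrC.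
have E2 y : ip (G y) x = ip (G x) y.
  have := E1 ('i *: y); rewrite GZ ipZr ipZl conjCi mulNr.
  move/eqP; rewrite addrC subr_eq0 => /eqP/(mulfI (neq0Ci _)).
  done.
apply: ip_eq0_all => y.
have := E1 y; rewrite E2 -mulr2n => /eqP; rewrite mulrn_eq0 /= => /eqP.
done.
Qed.
End IP.
Section Lin.
Variable R : realType.
Variables U V : lmodType R[i].
Variable T : U -> V.
Hypothesis hT : linear T.
Lemma lin0 : T 0 = 0.
Proof.
have h := hT 1 0 0; rewrite !scale1r addr0 in h.
by apply: (addrI (T 0)); rewrite addr0 -h.
Qed.
Lemma linD x y : T (x + y) = T x + T y.
Proof. by rewrite -{1}[x]scale1r hT scale1r. Qed.
Lemma linZ a x : T (a *: x) = a *: T x.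
Proof. by rewrite -[a *: x]addr0 hT lin0 addr0. Qed.
Lemma linN x : T (- x) = - T x.
Proof. by rewrite -scaleN1r linZ scaleN1r. Qed.
Lemma linB x y : T (x - y) = T x - T y.
Proof. by rewrite linD linN. Qed.
Lemma lin_sum I (r : seq I) (P : pred I) (F : I -> U) :
  T (\sum_(i <- r | P i) F i) = \sum_(i <- r | P i) T (F i).
Proof. by elim/big_rec2: _ => [|i y1 y2 _ <-]; rewrite ?lin0 ?linD. Qed.
End Lin.
Section SumLen.
Variable R : realType.
Lemma sum_len0 d (F : word d -> R) : sum_len 0 F = F [::].
Proof.
rewrite /sum_len (eq_bigr (fun _ => F [::])); last by move=> t _; rewrite tuple0.
by rewrite sumr_const card_tuple expn0.
Qed.
Lemma sum_lenS d n (F : word d -> R) :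
  sum_len n.+1 F = \sum_(j < d) sum_len n (fun v => F (j :: v)).
Proof.
rewrite /sum_len pair_big /=.
rewrite (reindex (fun p : 'I_d * n.-tuple 'I_d => [tuple of p.1 :: p.2])) //=.
exists (fun t : n.+1.-tuple 'I_d => (thead t, [tuple of behead t])).
  by case=> j t _ /=; congr pair; apply: val_inj.
by move=> t _; rewrite [in RHS](tuple_eta t).
Qed.
Lemma sum_lenD d n (F G : word d -> R) :
  sum_len n (fun v => F v + G v) = sum_len n F + sum_len n G.
Proof. by rewrite /sum_len big_split. Qed.
Lemma sum_len_ge0 d n (F : word d -> R) : (forall v, 0 <= F v) -> 0 <= sum_len n F.
Proof. by move=> h; rewrite /sum_len sumr_ge0. Qed.
Lemma sum_len_exch d n (F : 'I_d -> word d -> R) :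
  \sum_(j < d) sum_len n (F j) = sum_len n (fun v => \sum_(j < d) F j v).
Proof. by rewrite /sum_len exchange_big. Qed.
End SumLen.
Section Adj.
Variable R : realType.
Variables X Y : hilbert R.
Lemma ip_ext_r (z1 z2 : X) : (forall u : X, hs_ip u z1 = hs_ip u z2) -> z1 = z2.
Proof.
move=> h; apply/eqP; rewrite -subr_eq0; apply/eqP; apply: ip_eq0_all => v.
by rewrite hs_ipC ipBr h subrr rmorph0.
Qed.
Lemma adj_lin (T : X -> Y) (Ts : Y -> X) : is_adjoint T Ts -> linear Ts.
Proof.
move=> h a y y'; apply: ip_ext_r => u.
by rewrite -h ipDr ipZr ipDr ipZr !h.
Qed.
Lemma adj_self (T : X -> Y) (Ts : Y -> X) x : is_adjoint T Ts ->
  hs_ip (Ts (T x)) x = (hnorm2 (T x))%:C%C.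
Proof. by move=> h; rewrite hs_ipC -h ip_selfE conj_real. Qed.
End Adj.

Lemma zmod_aux (V : zmodType) (u v w : V) : u - v = (w - v) - (w - u).
Proof. by rewrite (opprB w u) (addrC (w - v)) addrA subrK. Qed.

Section Main.
Variables (R : realType) (d : nat) (X Y : hilbert R).
Variables (C : X -> Y) (Cs : Y -> X) (A As : 'I_d -> X -> X).
Hypothesis hC : bounded_lin C.
Hypothesis hA : forall j, bounded_lin (A j).
Hypothesis hCs : is_adjoint C Cs.
Hypothesis hAs : forall j, is_adjoint (A j) (As j).
Hypothesis hcontr : contractive_pair C Cs A As.
Variable Q : X -> X.
Hypothesis hQ : is_orth_proj Q (orth_compl [set x | Ohat C A x = (fun _ => 0)]).

Local Notation O := (Ohat C A).
Local Notation ip := (@hs_ip R X).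
Definition K : set X := [set x | Ohat C A x = (fun _ => 0)].
Definition W := orth_compl K.

Let linC : linear C := hC.1.
Let linA j : linear (A j) := (hA j).1.
Let linCs : linear Cs := adj_lin hCs.
Let linAs j : linear (As j) := adj_lin (hAs j).

Lemma ApowZD (v : word d) (a : R[i]) (x y : X) : Apow A v (a *: x + y) = a *: Apow A v x + Apow A v y.
Proof. by elim: v => [|i v IH] //=; rewrite IH linA. Qed.
Lemma Apow_rcons (B : 'I_d -> X -> X) (v : word d) j (x : X) : Apow B (rcons v j) x = Apow B v (B j x).
Proof. by rewrite /Apow foldr_rcons. Qed.
Lemma Apow_adj (v : word d) (x u : X) : ip (Apow A v x) u = ip x (Apow As (rev v) u).
Proof.
elim: v x u => [|i v IH] x u //=.
by rewrite (hAs i) IH rev_cons Apow_rcons.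
Qed.
Lemma Ov_lin (v : word d) : linear (fun x => O x v).
Proof. by move=> a x y; rewrite /Ohat ApowZD linC. Qed.
Lemma OZD (a : R[i]) (x y : X) : O (a *: x + y) = (fun v => a *: O x v + O y v).
Proof. by apply: funext => v; rewrite (Ov_lin v). Qed.
Lemma OB (x y : X) (v : word d) : O (x - y) v = O x v - O y v.
Proof. exact: (linB (Ov_lin v)). Qed.
Lemma O0 : O 0 = (fun _ => 0).
Proof. by apply: funext => v; rewrite (lin0 (Ov_lin v)). Qed.
Lemma KP (z : X) : K z <-> forall v, O z v = 0.
Proof. by split => [h v| h]; [rewrite /K /= in h; rewrite h | apply: funext]. Qed.
Lemma K_sub (a : R[i]) (x y : X) : K x -> K y -> K (a *: x + y).
Proof. by move=> /KP hx /KP hy; apply/KP => v; rewrite (Ov_lin v) hx hy scaler0 addr0. Qed.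
Lemma K0 : K 0. Proof. exact: O0. Qed.
Lemma KB (x y : X) : K x -> K y -> K (x - y).
Proof. by move=> hx hy; rewrite -scaleN1r addrC; apply: K_sub. Qed.
Lemma W_sub (a : R[i]) (x y : X) : W x -> W y -> W (a *: x + y).
Proof. by move=> hx hy k hk; rewrite hs_ipDZl hx // hy // mulr0 addr0. Qed.
Lemma W0 : W 0. Proof. by move=> k _; rewrite ip0l. Qed.
Lemma WB (x y : X) : W x -> W y -> W (x - y).
Proof. by move=> hx hy; rewrite -scaleN1r addrC; apply: W_sub. Qed.
Lemma WK0 (x : X) : W x -> K x -> x = 0.
Proof. by move=> hw hk; apply: hs_ip_eq0; apply: hw. Qed.
Lemma KW_orth (k w : X) : K k -> W w -> ip k w = 0.
Proof. by move=> hk hw; rewrite hs_ipC hw // rmorph0. Qed.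
Lemma zW (v : word d) (c : Y) : W (Apow As (rev v) (Cs c)).
Proof.
move=> k /KP hk; rewrite hs_ipC -Apow_adj -hCs.
by have := hk v; rewrite /Ohat => ->; rewrite ip0l rmorph0.
Qed.
Lemma Wperp (z : X) : (forall w, W w -> ip z w = 0) -> K z.
Proof.
move=> h; apply/KP => v; apply: hs_ip_eq0.
rewrite {1}/Ohat hCs Apow_adj h //; exact: zW.
Qed.
Lemma QW (x : X) : W (Q x). Proof. exact: (hQ x).1. Qed.
Lemma QK (x : X) : K (x - Q x). Proof. by apply: Wperp; apply: (hQ x).2. Qed.
Lemma Qlin (a : R[i]) (x y : X) : Q (a *: x + y) = a *: Q x + Q y.
Proof.
apply/eqP; rewrite -subr_eq0; apply/eqP; apply: WK0.
  by apply: WB; [apply: QW | apply: W_sub; apply: QW].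
rewrite (zmod_aux _ _ (a *: x + y)).
have -> : a *: x + y - (a *: Q x + Q y) = a *: (x - Q x) + (y - Q y).
  by rewrite scalerBr opprD addrACA.
by apply: KB; [apply: K_sub; apply: QK | apply: QK].
Qed.
Lemma QK0 (k : X) : K k -> Q k = 0.
Proof.
move=> hk; apply: WK0; first exact: QW.
have -> : Q k = k - (k - Q k) by rewrite opprB addrC subrK.
by apply: KB => //; apply: QK.
Qed.
Lemma QW_id (w : X) : W w -> Q w = w.
Proof.
move=> hw; apply/eqP; rewrite eq_sym -subr_eq0; apply/eqP.
by apply: WK0; [apply: WB => //; apply: QW | apply: QK].
Qed.
Lemma QB (x y : X) : Q (x - y) = Q x - Q y.
Proof. by rewrite -scaleN1r addrC Qlin scaleN1r addrC. Qed.
Lemma QD (x y : X) : Q (x + y) = Q x + Q y.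
Proof. by rewrite -{1}[x]scale1r Qlin scale1r. Qed.
Lemma QZ (a : R[i]) (x : X) : Q (a *: x) = a *: Q x.
Proof.
have Q0 : Q 0 = 0 by have := QB 0 0; rewrite !subrr.
by rewrite -[a *: x]addr0 Qlin Q0 addr0.
Qed.
Lemma Q_lin : linear Q.
Proof. by move=> a x y; apply: Qlin. Qed.
Lemma OQ (x : X) : O (Q x) = O x.
Proof.
apply: funext => v; have := (KP _).1 (QK x) v; rewrite OB => /eqP.
by rewrite subr_eq0 => /eqP.
Qed.
Lemma Qeq (p x : X) : O p = O x -> Q p = Q x.
Proof.
move=> h; apply/eqP; rewrite -subr_eq0 -QB; apply/eqP; apply: QK0.
by apply/KP => v; rewrite OB h subrr.
Qed.
Lemma ipQl (x y : X) : ip (Q x) y = ip (Q x) (Q y).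
Proof.
have := QW x (QK y); rewrite ipBr => /eqP; rewrite subr_eq0 => /eqP //.
Qed.
Lemma ipQr (x y : X) : ip x (Q y) = ip (Q x) (Q y).
Proof.
have := KW_orth (QK x) (QW y); rewrite ipBl => /eqP; rewrite subr_eq0 => /eqP //.
Qed.
Lemma hnQ (y : X) : hnorm2 (Q y) <= hnorm2 y.
Proof.
have := hnorm2_orth (QW y (QK y)); rewrite addrC subrK => ->.
by rewrite lerDl hnorm2_ge0.
Qed.
Lemma preimP (f : fps d Y) : ran O f -> O (Defs.preim O f) = f.
Proof.
case=> x hx; rewrite /Defs.preim.
exact: (epsilon_spec (inhabits (0:X)) (fun z : X => O z = f) (ex_intro _ x hx)).
Qed.
Lemma pO (x : X) : Q (Defs.preim O (O x)) = Q x.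
Proof. by apply: Qeq; apply: preimP; exists x. Qed.
Lemma ipM_O (x y : X) : lifted_ip O Q (O x) (O y) = ip (Q x) (Q y).
Proof. by rewrite /lifted_ip !pO. Qed.
Lemma SR_O (j : 'I_d) (x : X) : SRadj j (O x) = O (A j x).
Proof. by apply: funext => v; rewrite /SRadj /Ohat Apow_rcons. Qed.

Definition Dd (y : X) : R :=
  hnorm2 y - hnorm2 (C y) - \sum_(j < d) hnorm2 (A j y).
Lemma Dd_ge0 (y : X) : 0 <= Dd y.
Proof.
have := hcontr y; rewrite ipDl ip_suml (adj_self _ hCs).
under eq_bigr do rewrite (adj_self _ (hAs _)).
rewrite ip_selfE -rmorph_sum -rmorphD lecR.
by rewrite /Dd -addrA -opprD subr_ge0.
Qed.
Definition TA n (x : X) := sum_len n (fun v => hnorm2 (Apow A v x)).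
Definition ES N (x : X) := \sum_(n < N) sum_len n (fun v => Dd (Apow A v x)).
Lemma step n (x : X) : TA n x = sum_len n (fun v => hnorm2 (O x v)) + TA n.+1 x
   + sum_len n (fun v => Dd (Apow A v x)).
Proof.
rewrite /TA sum_lenS sum_len_exch -!sum_lenD /sum_len; apply: eq_bigr => t _ /=.
rewrite /Dd /Ohat /=; ring.
Qed.
Lemma main_id N (x : X) : hnorm2 x = h2_psum (O x) N + TA N x + ES N x.
Proof.
elim: N => [|N IH].
  by rewrite /h2_psum /ES !big_ord0 /TA sum_len0 /= add0r addr0.
rewrite /h2_psum /ES !big_ord_recr /= -/(h2_psum _ _) -/(ES _ _) IH step; ring.
Qed.
Lemma TA_ge0 n (x : X) : 0 <= TA n x.
Proof. by apply: sum_len_ge0 => v; apply: hnorm2_ge0. Qed.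
Lemma ES_ge0 n (x : X) : 0 <= ES n x.
Proof. by apply: sumr_ge0 => i _; apply: sum_len_ge0 => v; apply: Dd_ge0. Qed.
Lemma psum_le N (x : X) : h2_psum (O x) N <= hnorm2 x.
Proof.
rewrite (main_id N x) -addrA lerDl; apply: addr_ge0; [apply: TA_ge0|apply: ES_ge0].
Qed.
Lemma psum_mono (f : fps d Y) N M : (N <= M)%N -> h2_psum f N <= h2_psum f M.
Proof.
move/subnKC => <-; elim: (M - N)%N => [|k IH]; first by rewrite addn0.
rewrite addnS /h2_psum big_ord_recr /= -/(h2_psum _ _).
apply: (le_trans IH); rewrite lerDl; apply: sum_len_ge0 => v; apply: hnorm2_ge0.
Qed.
Lemma ran_psum_sup (x : X) : has_sup (range (h2_psum (O x))).
Proof.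
split; first by exists (h2_psum (O x) 0); exists 0%N.
by exists (hnorm2 x) => _ [n _ <-]; apply: psum_le.
Qed.
Lemma inH2 (x : X) : in_H2 (O x).
Proof. by exists (hnorm2 x) => N; apply: psum_le. Qed.
Lemma h2_le (x : X) : h2_norm2 (O x) <= hnorm2 x.
Proof.
apply: ge_sup; first by exists (h2_psum (O x) 0); exists 0%N.
by move=> _ [n _ <-]; apply: psum_le.
Qed.
Definition GP (P : X -> X) (x : X) :=
  P x - \sum_(j < d) As j (P (A j x)) - Cs (C x).
Section GPsec.
Variable P : X -> X.
Hypothesis hP : linear P.
Hypothesis hP1 : forall y, ip (P y) y = (hnorm2 (P y))%:C%C.
Hypothesis hP2 : forall y, ip y (P y) = (hnorm2 (P y))%:C%C.
Definition GPr (x : X) : R :=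
  hnorm2 (P x) - \sum_(j < d) hnorm2 (P (A j x)) - hnorm2 (C x).
Lemma GP_ip (x : X) : ip (GP P x) x = (GPr x)%:C%C.
Proof.
rewrite /GP /GPr !ipBl ip_suml hP1 (adj_self _ hCs).
under eq_bigr do rewrite hs_ipC -(hAs _) hP2 conj_real.
by rewrite !rmorphB rmorph_sum.
Qed.
Lemma GPD (x y : X) : GP P (x + y) = GP P x + GP P y.
Proof.
rewrite /GP (linD hP) (linD linC) (linD linCs).
under eq_bigr do rewrite (linD (linA _)) (linD hP) (linD (linAs _)).
rewrite big_split /= !opprD !addrA; congr (_ + _).
rewrite -!addrA; congr (_ + _); rewrite addrC -!addrA; congr (_ + _).
by rewrite addrC -!addrA; congr (_ + _); rewrite addrC.
Qed.
Lemma GPZ (a : R[i]) (x : X) : GP P (a *: x) = a *: GP P x.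
Proof.
rewrite /GP (linZ hP) (linZ linC) (linZ linCs).
under eq_bigr do rewrite (linZ (linA _)) (linZ hP) (linZ (linAs _)).
by rewrite -scaler_sumr -!scalerBr.
Qed.
Lemma GP_iff : (forall x, GPr x = 0) <-> (forall x, GP P x = 0).
Proof.
split=> h.
  apply: polar; [exact: GPD | exact: GPZ | move=> x; by rewrite GP_ip h].
move=> x; have := GP_ip x; rewrite h ip0l => /esym.
by case.
Qed.
End GPsec.
Lemma id_P1 (y : X) : ip y y = (hnorm2 y)%:C%C. Proof. exact: ip_selfE. Qed.
Lemma Q_P1 (y : X) : ip (Q y) y = (hnorm2 (Q y))%:C%C.
Proof. by rewrite ipQl ip_selfE. Qed.
Lemma Q_P2 (y : X) : ip y (Q y) = (hnorm2 (Q y))%:C%C.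
Proof. by rewrite ipQr ip_selfE. Qed.
Lemma id_lin : linear (fun x : X => x). Proof. by []. Qed.

Lemma iso_iff : isometric_pair C Cs A As <-> (forall x, Dd x = 0).
Proof.
have E x : GPr (fun x => x) x = Dd x by rewrite /GPr /Dd addrAC.
have E2 x : (x + - \sum_(j < d) As j (A j x) - Cs (C x) = 0) <->
     (Cs (C x) + \sum_(j < d) As j (A j x) = x).
  by split => h0; apply/eqP; move/eqP: h0; rewrite -addrA -opprD subr_eq0 eq_sym addrC.
split=> h.
  move=> x; rewrite -E; move: x; apply/(GP_iff id_lin id_P1 id_P1) => x.
  by apply/E2; apply: h.
move=> x; apply/E2; move: x; apply/(GP_iff id_lin id_P1 id_P1) => x.
by rewrite E h.
Qed.

Lemma part2_iff :
  (forall x, h2_norm2 (O x) = hnorm2 x) <-> isometric_pair C Cs A As /\ strongly_stable A.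
Proof.
split=> [h|[hi hs]].
  have adh x e : 0 < e -> exists N, forall M, (N <= M)%N -> TA M x + ES M x < e.
    move=> e0; have [r [N _ <-]] := sup_adherent e0 (ran_psum_sup x).
    move=> hN; rewrite -[sup _]/(h2_norm2 (O x)) h in hN.
    exists N => M hM.
    have := main_id M x; have := psum_mono (O x) hM; lra.
  split.
    apply/iso_iff => x; apply/eqP; rewrite eq_le Dd_ge0 andbT leNgt; apply/negP => hpos.
    have [N HN] := adh x _ hpos; have := HN N.+1 (leqnSn N).
    rewrite /ES big_ord_recl /= sum_len0 /= => H.
    have : Dd x < Dd x; last by rewrite ltxx.
    have h1 := TA_ge0 N.+1 x.
    have h2 : 0 <= \sum_(i < N) sum_len (bump 0 i) (fun v => Dd (Apow A v x)).
      by apply: sumr_ge0 => i _; apply: sum_len_ge0 => v; apply: Dd_ge0.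
    move: H h1 h2; lra.
  move=> x e e0; have [N HN] := adh x _ e0; exists N => M hM.
  apply: le_lt_trans (HN M hM); rewrite lerDl; exact: ES_ge0.
have hD := (iso_iff.1 hi).
move=> x; apply/eqP; rewrite eq_le h2_le /=.
have ES0 N : ES N x = 0.
  by apply: big1 => n _; rewrite /sum_len big1 // => t _; rewrite hD.
rewrite leNgt; apply/negP => hlt.
have e0 : 0 < hnorm2 x - h2_norm2 (O x) by rewrite subr_gt0.
have [N HN] := hs x _ e0; have := HN N (leqnn N); rewrite -/(TA N x).
have := main_id N x; rewrite ES0 addr0.
have : h2_psum (O x) N <= h2_norm2 (O x).
  by apply: sup_upper_bound; [exact: ran_psum_sup | exists N].
lra.
Qed.
Lemma ipn_O (y : X) : ipnorm2 (lifted_ip O Q) (O y) = hnorm2 (Q y).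
Proof. by rewrite /ipnorm2 ipM_O. Qed.
Lemma sum_SR (x : X) : \sum_(j < d) ipnorm2 (lifted_ip O Q) (SRadj j (O x))
   = \sum_(j < d) hnorm2 (Q (A j x)).
Proof. by apply: eq_bigr => j _; rewrite SR_O ipn_O. Qed.
Lemma p4_ineq (f : fps d Y) : ran O f ->
  \sum_(j < d) ipnorm2 (lifted_ip O Q) (SRadj j f) <=
    ipnorm2 (lifted_ip O Q) f - hnorm2 (f [::]).
Proof.
case=> x <-; rewrite -(OQ x) sum_SR ipn_O.
have hw : W (Q x) by apply: QW.
rewrite (QW_id hw); move: hw; set w := Q x => hw.
have -> : O w [::] = C w by [].
have h1 : \sum_(j < d) hnorm2 (Q (A j w)) <= \sum_(j < d) hnorm2 (A j w).
  by apply: ler_sum => j _; apply: hnQ.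
have := Dd_ge0 w; rewrite /Dd; lra.
Qed.
Lemma p4_eq :
  (forall f, ran O f ->
     \sum_(j < d) ipnorm2 (lifted_ip O Q) (SRadj j f) =
       ipnorm2 (lifted_ip O Q) f - hnorm2 (f [::])) <->
  (forall x, Q x - \sum_(j < d) As j (Q (A j x)) = Cs (C x)).
Proof.
have E x : GP Q x = 0 <-> Q x - \sum_(j < d) As j (Q (A j x)) = Cs (C x).
  by split => h0; apply/eqP; move/eqP: h0; rewrite /GP subr_eq0.
have -> : (forall x, Q x - \sum_(j < d) As j (Q (A j x)) = Cs (C x)) <->
     (forall x, GP Q x = 0).
  by split => h x; apply/E.
rewrite -(GP_iff Q_lin Q_P1 Q_P2).
split => h.
  move=> x; have := h (O x) (ex_intro _ x erefl); rewrite sum_SR ipn_O.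
  have -> : O x [::] = C x by [].
  rewrite /GPr; lra.
move=> f [x <-]; rewrite sum_SR ipn_O.
have -> : O x [::] = C x by [].
have := h x; rewrite /GPr; lra.
Qed.
Lemma p4_obs : observable C A ->
  ((forall x, Q x - \sum_(j < d) As j (Q (A j x)) = Cs (C x)) <->
     isometric_pair C Cs A As).
Proof.
move=> hobs.
have Qid x : Q x = x.
  apply/eqP; rewrite eq_sym -subr_eq0; apply/eqP; apply: hobs; exact: QK.
have -> : Q = id by apply: funext => x; apply: Qid.
split=> h x; have := h x => /=.
  by move/eqP; rewrite subr_eq eq_sym => /eqP.
by move=> h0; apply/eqP; rewrite subr_eq eq_sym h0.
Qed.

Lemma fadd_O (a : R[i]) (x y : X) :
  fps_add (fps_scale a (O x)) (O y) = O (a *: x + y).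
Proof. by rewrite OZD. Qed.
Lemma fsub_O (x y : X) : fps_add (O x) (fps_scale (-1) (O y)) = O (x - y).
Proof. by apply: funext => v; rewrite OB /fps_add /fps_scale scaleN1r. Qed.

Lemma rkhs : is_formal_rkhs (ran O) (lifted_ip O Q) (KCA_col C Cs A As).
Proof.
split.
  split; first by exists 0; rewrite O0.
  split; first by move=> a f g [x <-] [y <-]; exists (a *: x + y); rewrite fadd_O.
  split.
  - by move=> a f g h [x <-] [y <-] [z <-]; rewrite fadd_O !ipM_O Qlin hs_ipDZl.
  - by move=> f g _ _; rewrite /lifted_ip hs_ipC.
  - move=> f [x <-]; rewrite ipM_O; split; first exact: hs_ip_ge0.
    by move/hs_ip_eq0 => hq; rewrite -(OQ x) hq O0.
  - move=> u hu hc.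
    pose w n := Q (Defs.preim O (u n)).
    have Ow n : O (w n) = u n by rewrite /w OQ preimP.
    have Ww n : W (w n) by apply: QW.
    have cauchy : ip_cauchy (@hs_ip R X) w.
      move=> e e0; have [N HN] := hc e e0; exists N => m n hm hn.
      have := HN m n hm hn; rewrite -!Ow fsub_O ipM_O QW_id //.
      by apply: WB.
    have [l hl] := hs_complete cauchy.
    exists (O (Q l)); split; first by exists (Q l).
    move=> e e0; have [N HN] := hl e e0; exists N => n hn.
    rewrite -Ow fsub_O ipM_O.
    have -> : Q (w n - Q l) = Q (w n - l).
      by rewrite !QB (QW_id (QW l)).
    exact: (le_lt_trans (hnQ _) (HN n hn)).
move=> beta y; split; first by exists (Apow As (rev beta) (Cs y)).
move=> f [x <-].
change (lifted_ip O Q (O x) (O (Apow As (rev beta) (Cs y))) = hs_ip (O x beta) y).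
by rewrite ipM_O -ipQr (QW_id (zW _ _)) -Apow_adj /Ohat -hCs.
Qed.

Lemma main_thm :
  let O := Ohat C A in
  let M := ran O in
  let ipM := lifted_ip O Q in
  [/\ output_stable C A,
      (forall (j : 'I_d) (x : X), SRadj j (O x) = O (A j x)) &
      (forall (j : 'I_d) (f : fps d Y), M f -> M (SRadj j f))] /\
  ((forall x, h2_norm2 (O x) <= hnorm2 x) /\
   ((forall x, h2_norm2 (O x) = hnorm2 x) <->
      isometric_pair C Cs A As /\ strongly_stable A)) /\
  [/\ (forall x, ipnorm2 ipM (O x) = hnorm2 (Q x)),
      (exists Os : fps d Y -> X,
          (forall x f, M f -> ipM (O x) f = hs_ip (x) (Os f)) /\
          (forall f, M f -> O (Os f) = f)),
      (forall f, M f -> in_H2 f /\ h2_norm2 f <= ipnorm2 ipM f) &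
      is_formal_rkhs M ipM (KCA_col C Cs A As)] /\
  [/\ (forall f, M f ->
         \sum_(j < d) ipnorm2 ipM (SRadj j f) <= ipnorm2 ipM f - hnorm2 (f [::])),
      ((forall f, M f ->
          \sum_(j < d) ipnorm2 ipM (SRadj j f) = ipnorm2 ipM f - hnorm2 (f [::])) <->
       (forall x, Q x - \sum_(j < d) As j (Q (A j x)) = Cs (C x))) &
      (observable C A ->
       ((forall f, M f ->
          \sum_(j < d) ipnorm2 ipM (SRadj j f) = ipnorm2 ipM f - hnorm2 (f [::])) <->
        isometric_pair C Cs A As))].
Proof.
move=> O0 M ipM; rewrite {}/ipM {}/M {}/O0.
split.
  split.
  - split; first exact: inH2.
    by exists 1 => x; rewrite mul1r; apply: h2_le.
  - exact: SR_O.
  - by move=> j f [x <-]; exists (A j x); rewrite SR_O.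
split; first by split; [exact: h2_le | exact: part2_iff].
split.
  split.
  - exact: ipn_O.
  - exists (fun f => Q (Defs.preim O f)); split.
      by move=> x f [y <-]; rewrite ipM_O pO -ipQr.
    by move=> f hf; rewrite OQ preimP.
  - move=> f [x <-]; split; first exact: inH2.
    rewrite ipn_O -(OQ x); exact: h2_le.
  - exact: rkhs.
split.
- exact: p4_ineq.
- exact: p4_eq.
- by move=> hobs; rewrite p4_eq; apply: p4_obs.
Qed.
End Main.

Unset Implicit Arguments.
Theorem theorem2p10 (R : realType) (d : nat) (X Y : hilbert R)
  (C : X -> Y) (Cs : Y -> X) (A As : 'I_d -> X -> X)
  (hC : bounded_lin C) (hA : forall j, bounded_lin (A j))
  (hCs : is_adjoint C Cs) (hAs : forall j, is_adjoint (A j) (As j))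
  (hcontr : contractive_pair C Cs A As)
  (Q : X -> X) (hQ : is_orth_proj Q (orth_compl [set x | Ohat C A x = (fun _ => 0)])) :
  let O := Ohat C A in
  let M := ran O in
  let ipM := lifted_ip O Q in
  (* (1) *)
  [/\ output_stable C A,
      (forall (j : 'I_d) (x : X), SRadj j (O x) = O (A j x)) &
      (forall (j : 'I_d) (f : fps d Y), M f -> M (SRadj j f))] /\
  (* (2) *)
  ((forall x, h2_norm2 (O x) <= hnorm2 x) /\
   ((forall x, h2_norm2 (O x) = hnorm2 x) <->
      isometric_pair C Cs A As /\ strongly_stable A)) /\
  (* (3) *)
  [/\ (forall x, ipnorm2 ipM (O x) = hnorm2 (Q x)),
      (exists Os : fps d Y -> X,
          (forall x f, M f -> ipM (O x) f = hs_ip (x) (Os f)) /\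
          (forall f, M f -> O (Os f) = f)),
      (forall f, M f -> in_H2 f /\ h2_norm2 f <= ipnorm2 ipM f) &
      is_formal_rkhs M ipM (KCA_col C Cs A As)] /\
  (* (4) *)
  [/\ (forall f, M f ->
         \sum_(j < d) ipnorm2 ipM (SRadj j f) <= ipnorm2 ipM f - hnorm2 (f [::])),
      ((forall f, M f ->
          \sum_(j < d) ipnorm2 ipM (SRadj j f) = ipnorm2 ipM f - hnorm2 (f [::])) <->
       (forall x, Q x - \sum_(j < d) As j (Q (A j x)) = Cs (C x))) &
      (observable C A ->
       ((forall f, M f ->
          \sum_(j < d) ipnorm2 ipM (SRadj j f) = ipnorm2 ipM f - hnorm2 (f [::])) <->
        isometric_pair C Cs A As))].
Proof. by apply: main_thm. Qed.
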